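(* Consider the robust dynamic pricing problem with valuation $v^\star\in[0,1]$, horizon $T$, and at most $C$ corrupted feedback observations. If $C$ is known to the learner, then there exists a pricing algorithm with regret \[ R_T\le\mathcal O(C+\log T), \] with a hidden constant independent of $T$, $C$, $v^\star$ and the adversary.
   Context: Robust dynamic pricing: there are $T$ rounds and an unknown valuation $v^\star$. At each round $t$ the seller posts a price $p_t\in[0,1]$ (based on past observations). The true sale indicator is $y_t=\mathbbm 1\{p_t\le v^\star\}$; the seller observes $\sigma_t\in\{0,1\}$, and at most $C$ rounds are corrupted: $|\{t\in[T]:\sigma_t\neq y_t\}|\le C$, where on corrupted rounds $\sigma_t$ may be chosen adversarially. Revenue is $r_t=p_t\,\mathbbm 1\{p_t\le v^\star\}$ and regret is $R_T=Tv^\star-\sum_{t=1}^T r_t$. $\log$ is base $2$. *)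

(* Defs.v *)
From Stdlib Require Import Reals Lra Lia List Bool.
Open Scope R_scope.

(* Rounds are indexed t = 0, ..., T-1.  A (deterministic) pricing algorithm
   maps the history of observed feedback bits sigma_0 .. sigma_{t-1}
   (in chronological order) to the price posted at round t. *)
Definition algorithm := list bool -> R.

Definition sale (p v : R) : bool := if Rle_dec p v then true else false.

Definition hist (sigma : nat -> bool) (t : nat) : list bool :=
  map sigma (seq 0 t).

Definition price (alg : algorithm) (sigma : nat -> bool) (t : nat) : R :=
  alg (hist sigma t).

Fixpoint num_corrupt (alg : algorithm) (v : R) (sigma : nat -> bool) (T : nat)
  : nat :=
  match T with
  | O => O
  | S n => (num_corrupt alg v sigma n +
            (if Bool.eqb (sigma n) (sale (price alg sigma n) v) then 0 else 1))%nat
  end.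

Fixpoint revenue (alg : algorithm) (v : R) (sigma : nat -> bool) (T : nat) : R :=
  match T with
  | O => 0
  | S n => revenue alg v sigma n +
           (if sale (price alg sigma n) v then price alg sigma n else 0)
  end.

Definition regret (alg : algorithm) (v : R) (sigma : nat -> bool) (T : nat) : R :=
  INR T * v - revenue alg v sigma T.

Definition log2 (x : R) : R := ln x / ln 2.

(* Main.v *)
Require Import Defs.
From Stdlib Require Import Reals Lra Lia List Bool ZArith.
Open Scope R_scope.
Import ListNotations.

Section Alg.
Variables D C : nat.

Inductive phase := PA | PB | PM.
Record state := mk { path : list bool; ph : phase; cnt : nat -> nat }.

Fixpoint aidx (p : list bool) : nat :=
  match p with
  | [] => 0%nat
  | x :: q => (aidx q + (if x then 2 ^ (D - S (length q)) else 0))%nat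
  end.
Definition wid (p : list bool) : nat := (2 ^ (D - length p))%nat.
Definition bidx p : nat := (aidx p + wid p)%nat.
Definition midx p : nat := (aidx p + 2 ^ (D - S (length p)))%nat.
Definition NN : nat := (2 ^ D)%nat.

Definition pidx (s : state) : nat :=
  match ph s with
  | PA => aidx (path s)
  | PB => bidx (path s)
  | PM => if Nat.ltb (length (path s)) D then midx (path s) else aidx (path s)
  end.
Definition sprice (s : state) : R := INR (pidx s) / INR NN.
Definition upd (f : nat -> nat) (b : nat) : nat -> nat :=
  fun j => if Nat.eqb j b then S (f j) else f j.

Definition step (s : state) (sg : bool) : state :=
  let p := path s in let c := cnt s in
  match ph s with
  | PA => if sg then
            (if Nat.leb D (length p) then
               (if Nat.leb NN (bidx p) || Nat.leb (S C) (c (bidx p)) then s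
                else mk p PB c)
             else mk p PB c)
          else mk (tl p) PA c
  | PB => if Nat.leb D (length p) then
            (if Nat.leb NN (bidx p) then mk p PA c
             else if sg then mk (tl p) PA c else mk p PA (upd c (bidx p)))
          else
            (if Nat.leb NN (bidx p) then mk p PM c
             else if sg then mk (tl p) PA c else mk p PM c)
  | PM => if Nat.leb D (length p) then mk p PA c else mk (sg :: p) PA c
  end.

Definition s0 : state := mk [] PA (fun _ => 0%nat).
Definition run (h : list bool) : state := fold_left step h s0.
Definition galg : algorithm := fun h => sprice (run h).

Lemma pow2_split l : (S l <= D)%nat -> (2 ^ (D - l) = 2 * 2 ^ (D - S l))%nat.
Proof. intro H. replace (D - l)%nat with (S (D - S l)) by lia. simpl. lia. Qed.

Lemma subtree s q : (length (s ++ q) <= D)%nat ->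
  (aidx q <= aidx (s ++ q))%nat /\ (bidx (s ++ q) <= bidx q)%nat.
Proof.
  induction s as [|x s IH]; simpl; intro H.
  - lia.
  - destruct IH as [IH1 IH2]; [lia|]. unfold bidx, wid in *. simpl.
    rewrite (pow2_split (length (s ++ q))) in IH2 by lia.
    destruct x; lia.
Qed.

Lemma bidx_le_N p : (length p <= D)%nat -> (aidx p <= bidx p <= NN)%nat.
Proof.
  intro H. pose proof (subtree p [] ) as S. rewrite app_nil_r in S.
  destruct (S H) as [_ S2]. unfold bidx, wid, NN in *. simpl in S2.
  rewrite Nat.sub_0_r in S2. lia.
Qed.

Lemma NN_pos : (0 < NN)%nat.
Proof. unfold NN. apply Nat.neq_0_lt_0, Nat.pow_nonzero. lia. Qed.

Lemma pidx_le p ph c : (length p <= D)%nat -> (pidx (mk p ph c) <= NN)%nat.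
Proof.
  intro H. pose proof (bidx_le_N p H). unfold pidx; simpl.
  destruct ph; try lia.
  destruct (Nat.ltb_spec (length p) D); try lia.
  unfold midx, bidx, wid in *. rewrite (pow2_split (length p)) in H0 by lia. lia.
Qed.

Lemma step_len s sg : (length (path s) <= D)%nat -> (length (path (step s sg)) <= D)%nat.
Proof.
  intro H. destruct s as [p f c]; unfold step; simpl in *.
  destruct f, sg; simpl;
  repeat match goal with |- context [if ?b then _ else _] => destruct b eqn:? end;
  simpl; try rewrite length_tl; try lia;
  apply Nat.leb_gt in Heqb; lia.
Qed.


Variable v : R.
Hypothesis Hv : 0 <= v <= 1.

Lemma sale_t p : p <= v -> sale p v = true.
Proof. intro. unfold sale. destruct (Rle_dec p v); auto; lra. Qed.
Lemma sale_f p : v < p -> sale p v = false.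
Proof. intro. unfold sale. destruct (Rle_dec p v); auto; lra. Qed.
Lemma sale_tr p : sale p v = true -> p <= v.
Proof. unfold sale. destruct (Rle_dec p v); auto; discriminate. Qed.
Lemma sale_fr p : sale p v = false -> v < p.
Proof. unfold sale. destruct (Rle_dec p v); [discriminate|lra]. Qed.

Definition rp (k : nat) : R := INR k / INR NN.

Lemma rp_le k l : (k <= l)%nat -> rp k <= rp l.
Proof.
  intro. unfold rp. pose proof NN_pos. apply Rmult_le_compat_r.
  - left. apply Rinv_0_lt_compat. apply lt_0_INR. lia.
  - apply le_INR. auto.
Qed.
Lemma rp_lt k l : (k < l)%nat -> rp k < rp l.
Proof.
  intro. unfold rp. pose proof NN_pos. apply Rmult_lt_compat_r.
  - apply Rinv_0_lt_compat. apply lt_0_INR. lia.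
  - apply lt_INR. auto.
Qed.

Fixpoint ip (d : nat) : list bool :=
  match d with
  | O => []
  | S d' => sale (rp (midx (ip d'))) v :: ip d'
  end.
Definition ib (d : nat) : bool := sale (rp (midx (ip d))) v.

Lemma ip_len d : length (ip d) = d.
Proof. induction d; simpl; auto. Qed.

Lemma ip_good d : (d <= D)%nat ->
  rp (aidx (ip d)) <= v /\ ((NN <= bidx (ip d))%nat \/ v < rp (bidx (ip d))).
Proof.
  induction d as [|d IH]; intro H.
  - simpl. unfold rp, bidx, wid, NN; simpl. rewrite Nat.sub_0_r. split.
    + unfold Rdiv. rewrite Rmult_0_l. lra.
    + left. lia.
  - destruct IH as [IH1 IH2]; [lia|].
    assert (E : (2 ^ (D - d) = 2 * 2 ^ (D - S d))%nat) by (apply pow2_split; lia).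
    simpl ip. unfold bidx, wid in *. simpl. rewrite ip_len in *.
    destruct (sale (rp (midx (ip d))) v) eqn:Hs.
    + apply sale_tr in Hs. unfold midx in Hs. rewrite ip_len in Hs. split; [exact Hs|].
      replace (aidx (ip d) + 2 ^ (D - S d) + 2 ^ (D - S d))%nat with (aidx (ip d) + 2 ^ (D - d))%nat by lia.
      exact IH2.
    + apply sale_fr in Hs. unfold midx in Hs. rewrite ip_len in Hs. split.
      * rewrite Nat.add_0_r. exact IH1.
      * right. rewrite Nat.add_0_r. exact Hs.
Qed.

Fixpoint cls (p : list bool) : option (bool * nat) :=
  match p with
  | [] => None
  | x :: q => match cls q with
              | None => if Bool.eqb x (ib (length q)) then None else Some (x, 1%nat)
              | Some (t, e) => Some (t, S e)
              end
  end.

Lemma cls_none p : cls p = None -> p = ip (length p).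
Proof.
  induction p as [|x q IH]; simpl; auto.
  destruct (cls q) as [[t e]|]; [discriminate|].
  destruct (Bool.eqb x (ib (length q))) eqn:E; [|discriminate].
  intros _. apply Bool.eqb_prop in E. assert (Hq : q = ip (length q)) by auto.
  subst x. simpl. unfold ib. rewrite <- Hq. reflexivity.
Qed.

Lemma cls_some p t e : cls p = Some (t, e) ->
  (1 <= e <= length p)%nat /\
  exists s, p = s ++ t :: ip (length p - e) /\ t = negb (ib (length p - e)).
Proof.
  revert t e. induction p as [|x q IH]; simpl; intros t e H; [discriminate|].
  destruct (cls q) as [[t' e']|] eqn:Hq.
  - injection H as <- <-. destruct (IH t' e' eq_refl) as [H1 [s [H2 H3]]].
    split; [lia|]. exists (x :: s). replace (S (length q) - S e')%nat with (length q - e')%nat by lia.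
    rewrite H2 at 1. split; auto.
  - destruct (Bool.eqb x (ib (length q))) eqn:E; [discriminate|].
    injection H as <- <-. split; [lia|]. exists []. apply cls_none in Hq.
    replace (S (length q) - 1)%nat with (length q) by lia. simpl. rewrite Nat.sub_0_r. split; [f_equal; exact Hq|].
    destruct x, (ib (length q)); simpl in *; auto; discriminate.
Qed.

Lemma cls_tl p t e : cls p = Some (t, e) ->
  (e = 1%nat /\ cls (tl p) = None /\ length (tl p) = (length p - 1)%nat) \/
  (2 <= e /\ cls (tl p) = Some (t, (e - 1)%nat) /\ length (tl p) = (length p - 1)%nat)%nat.
Proof.
  destruct p as [|x q]; simpl; [discriminate|].
  destruct (cls q) as [[t' e']|] eqn:Hq.
  - intro H; injection H as <- <-. right. pose proof (cls_some _ _ _ Hq). 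
    replace (S e' - 1)%nat with e' by lia. repeat split; auto; lia.
  - destruct (Bool.eqb x (ib (length q))); [discriminate|]. intro H; injection H as <- <-.
    left. repeat split; auto; lia.
Qed.

Lemma cls_none_tl p : cls p = None -> cls (tl p) = None.
Proof.
  destruct p as [|x q]; simpl; auto.
  destruct (cls q) as [[t' e']|]; [discriminate|]. auto.
Qed.

Lemma facts_H p e : (length p <= D)%nat -> cls p = Some (true, e) ->
  v < rp (aidx p).
Proof.
  intros HD Hc. destruct (cls_some _ _ _ Hc) as [He [s [Hp Hb]]].
  set (g := (length p - e)%nat) in *.
  assert (Hib : ib g = false) by (destruct (ib g); auto; discriminate).
  unfold ib in Hib. apply sale_fr in Hib.
  eapply Rlt_le_trans; [exact Hib|]. apply rp_le.
  rewrite Hp. rewrite Hp in HD. destruct (subtree s (true :: ip g) HD) as [S1 _].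
  simpl in S1. rewrite ip_len in S1. unfold midx. rewrite ip_len. exact S1.
Qed.

Lemma facts_L p e : (length p <= D)%nat -> cls p = Some (false, e) ->
  (bidx p < NN)%nat /\ rp (bidx p) <= v.
Proof.
  intros HD Hc. destruct (cls_some _ _ _ Hc) as [He [s [Hp Hb]]].
  set (g := (length p - e)%nat) in *.
  assert (Hib : ib g = true) by (destruct (ib g); auto; discriminate).
  unfold ib in Hib. apply sale_tr in Hib.
  assert (HD' := HD). rewrite Hp in HD'. destruct (subtree s (false :: ip g) HD') as [_ S2].
  rewrite <- Hp in S2. unfold bidx, wid in S2. simpl in S2. rewrite ip_len, Nat.add_0_r in S2.
  assert (Hg : (g < D)%nat) by (unfold g; lia).
  pose proof (bidx_le_N (ip g)) as B. rewrite ip_len in B. specialize (B ltac:(lia)).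
  unfold bidx, wid in B. rewrite ip_len in B. rewrite (pow2_split g) in B by lia.
  assert (0 < 2 ^ (D - S g))%nat by (apply Nat.neq_0_lt_0, Nat.pow_nonzero; lia).
  split.
  - unfold bidx, wid. lia.
  - eapply Rle_trans; [|exact Hib]. apply rp_le. unfold midx. rewrite ip_len. unfold bidx, wid. lia.
Qed.


Definition bstar : nat := bidx (ip D).
Definition rr (c : nat -> nat) : nat :=
  if Nat.leb NN bstar then 0%nat else (S C - c bstar)%nat.
Definition gdF (cl : option (bool * nat)) (d : nat) : nat :=
  match cl with None => d | Some (_, e) => (d - e)%nat end.
Open Scope Z_scope.
Definition W (cl : option (bool * nat)) (leaf : bool) (f : phase) (r : nat) : Z :=
  match cl, f with
  | None, PA => 0
  | None, PB => if leaf then (if Nat.eqb r 0 then 1 else -1) else -1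
  | None, PM => if leaf then 1 else -2
  | Some (true, e), PA => Z.of_nat e
  | Some (true, e), PB => Z.of_nat e + 3
  | Some (true, e), PM => if leaf then Z.of_nat e + 1 else Z.of_nat e + 2
  | Some (false, e), PA => 2 * Z.of_nat e
  | Some (false, e), PB => 2 * Z.of_nat e - 1
  | Some (false, e), PM => if leaf then 2 * Z.of_nat e + 1 else 2 * Z.of_nat e + 3
  end.
Definition PhiF cl d f r : Z :=
  3 * (Z.of_nat D - Z.of_nat (gdF cl d)) + 2 * Z.of_nat r + W cl (Nat.leb D d) f r.
Definition Phi (s : state) : Z := PhiF (cls (path s)) (length (path s)) (ph s) (rr (cnt s)).
Close Scope Z_scope.

Lemma rr_upd_same c b : b = bstar -> (bstar < NN)%nat -> rr (upd c b) = (rr c - 1)%nat.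
Proof.
  intros -> H. unfold rr, upd. rewrite Nat.eqb_refl.
  destruct (Nat.leb_spec NN bstar); lia.
Qed.
Lemma rr_upd_other c b : b <> bstar -> rr (upd c b) = rr c.
Proof.
  intros H. unfold rr, upd. destruct (Nat.eqb_spec bstar b); [congruence|]. reflexivity.
Qed.
Lemma rr_le c : (rr c <= S C)%nat.
Proof. unfold rr. destruct (Nat.leb NN bstar); lia. Qed.

Lemma rp_succ a : rp (S a) = rp a + 1 / INR NN.
Proof. unfold rp. rewrite S_INR. field. pose proof NN_pos. apply not_0_INR. lia. Qed.
Lemma rp_NN : rp NN = 1.
Proof. unfold rp. field. pose proof NN_pos. apply not_0_INR. lia. Qed.

Lemma exploit_bound a : rp a <= v -> ((NN <= S a)%nat \/ v < rp (S a)) -> v - rp a <= 1 / INR NN.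
Proof.
  intros H1 H2. pose proof (rp_succ a). destruct H2 as [H2|H2].
  - apply rp_le in H2. rewrite rp_NN in H2. lra.
  - lra.
Qed.

Lemma bidx_leaf p : length p = D -> bidx p = S (aidx p).
Proof. intro H. unfold bidx, wid. rewrite H, Nat.sub_diag. simpl. lia. Qed.


Definition lieZ (sg y : bool) : Z := if Bool.eqb sg y then 0%Z else 1%Z.

Ltac finZ :=
  unfold PhiF, gdF, W, lieZ; simpl Bool.eqb; cbv iota;
  repeat match goal with
  | |- context [Nat.leb ?a ?b] => destruct (Nat.leb_spec a b)
  | |- context [Nat.eqb ?a ?b] => destruct (Nat.eqb_spec a b)
  end; lia.

Definition GOAL (s : state) (sg : bool) : Prop :=
  let y := sale (sprice s) v in
  (Phi (step s sg) + 1 <= Phi s + 5 * lieZ sg y)%Z \/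
  ((Phi (step s sg) <= Phi s)%Z /\ y = true /\ v - sprice s <= 1 / INR NN).

Lemma comb_none p f c sg : (length p <= D)%nat -> cls p = None -> GOAL (mk p f c) sg.
Proof.
  intros HD Hc. pose proof (cls_none p Hc) as Hp.
  destruct (ip_good (length p) HD) as [Ha Hb]. rewrite <- Hp in Ha, Hb.
  assert (Hab := bidx_le_N p HD).
  assert (Htl : cls (tl p) = None) by (apply cls_none_tl; auto).
  assert (Hltl : length (tl p) = (length p - 1)%nat) by (rewrite length_tl; lia).
  destruct (Nat.leb_spec D (length p)) as [Hleaf|Hint].
  -
    assert (HL : length p = D) by lia.
    assert (Hbs : bidx p = bstar) by (unfold bstar; rewrite Hp at 1; rewrite HL; reflexivity).
    destruct f; unfold GOAL, step, sprice, pidx, Phi; cbn [path ph cnt];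
      fold (rp (aidx p)); fold (rp (bidx p)); 
      replace (Nat.leb D (length p)) with true by (symmetry; apply Nat.leb_le; lia).
    + rewrite (sale_t _ Ha). destruct sg.
      * destruct (Nat.leb NN (bidx p) || Nat.leb (S C) (c (bidx p))) eqn:Ecert.
        -- right. split; [apply Z.le_refl|]. split; [reflexivity|].
           apply exploit_bound; auto. rewrite <- bidx_leaf by auto. exact Hb.
        -- left. cbn [path ph cnt]. rewrite Hc.
           assert (rr c <> 0%nat).
           { unfold rr. rewrite <- Hbs. apply orb_false_iff in Ecert. destruct Ecert as [E1 E2].
             rewrite E1. apply Nat.leb_gt in E2. lia. }
           finZ.
      * left. cbn [path ph cnt]. rewrite Htl, Hltl, Hc. finZ.
    + destruct (Nat.leb_spec NN (bidx p)) as [HN|HN].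
      * left. cbn [path ph cnt]. rewrite Hc.
        assert (rr c = 0%nat) by (unfold rr; rewrite <- Hbs; destruct (Nat.leb_spec NN (bidx p)); lia).
        destruct (sale (rp (bidx p)) v); destruct sg; finZ.
      * destruct Hb as [Hb|Hb]; [lia|]. rewrite (sale_f _ Hb). left.
        destruct sg; cbn [path ph cnt].
        -- rewrite Htl, Hltl, Hc. finZ.
        -- rewrite Hc, (rr_upd_same c (bidx p) Hbs) by lia. finZ.
    + left. cbn [path ph cnt]. rewrite Hc.
      destruct (Nat.ltb_spec (length p) D); [lia|].
      fold (rp (aidx p)). destruct (sale _ v); destruct sg; finZ.
  -
    destruct f; unfold GOAL, step, sprice, pidx, Phi; cbn [path ph cnt];
      fold (rp (aidx p)); fold (rp (bidx p));
      replace (Nat.leb D (length p)) with false by (symmetry; apply Nat.leb_gt; lia).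
    + rewrite (sale_t _ Ha). left. destruct sg; cbn [path ph cnt]; [rewrite Hc|rewrite Htl, Hltl, Hc]; finZ.
    + destruct (Nat.leb_spec NN (bidx p)) as [HN|HN].
      * left. cbn [path ph cnt]. rewrite Hc. destruct (sale (rp (bidx p)) v); destruct sg; finZ.
      * destruct Hb as [Hb|Hb]; [lia|]. rewrite (sale_f _ Hb). left.
        destruct sg; cbn [path ph cnt]; [rewrite Htl, Hltl, Hc|rewrite Hc]; finZ.
    + left. destruct (Nat.ltb_spec (length p) D); [|lia]. fold (rp (midx p)).
      assert (Hm : sale (rp (midx p)) v = ib (length p)) by (unfold ib; rewrite <- Hp; reflexivity).
      rewrite Hm. cbn [path ph cnt]. simpl cls. rewrite Hc. simpl length.
      destruct sg, (ib (length p)); simpl; finZ.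
Qed.


Lemma H_ne_bstar p e : (length p = D) -> cls p = Some (true, e) -> bidx p <> bstar.
Proof.
  intros HL Hc. pose proof (facts_H p e ltac:(lia) Hc) as Ha.
  destruct (ip_good D (le_n D)) as [G1 _].
  unfold bstar. rewrite !bidx_leaf; [| rewrite ip_len; auto | auto].
  intro E. injection E as E. rewrite <- E in G1. lra.
Qed.

Lemma L_ne_bstar p e : (length p = D) -> cls p = Some (false, e) -> bidx p <> bstar \/ (NN <= bstar)%nat.
Proof.
  intros HL Hc. destruct (facts_L p e ltac:(lia) Hc) as [_ Hb].
  destruct (ip_good D (le_n D)) as [_ [G2|G2]]; [right; exact G2|].
  left. intro E. unfold bstar in E. rewrite E in Hb. lra.
Qed.

Ltac tlcase Hc :=
  let He := fresh in let Ht := fresh in let Hl := fresh in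
  destruct (cls_tl _ _ _ Hc) as [[He [Ht Hl]]|[He [Ht Hl]]]; rewrite Ht, Hl, Hc; try subst; finZ.

Lemma comb_H p e f c sg : (length p <= D)%nat -> cls p = Some (true, e) -> GOAL (mk p f c) sg.
Proof.
  intros HD Hc. pose proof (facts_H p e HD Hc) as Ha.
  pose proof (cls_some _ _ _ Hc) as [He _].
  assert (Hab := bidx_le_N p HD).
  assert (Hb : v < rp (bidx p)) by (eapply Rlt_le_trans; [exact Ha|]; apply rp_le; lia).
  destruct (Nat.leb_spec D (length p)) as [Hleaf|Hint].
  - assert (HL : length p = D) by lia.
    pose proof (H_ne_bstar p e HL Hc) as Hne.
    destruct f; unfold GOAL, step, sprice, pidx, Phi; cbn [path ph cnt];
      fold (rp (aidx p)); fold (rp (bidx p));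
      replace (Nat.leb D (length p)) with true by (symmetry; apply Nat.leb_le; lia);
      left.
    + rewrite (sale_f _ Ha). destruct sg.
      * destruct (Nat.leb NN (bidx p) || Nat.leb (S C) (c (bidx p))); cbn [path ph cnt]; rewrite Hc; finZ.
      * cbn [path ph cnt]. tlcase Hc.
    + rewrite (sale_f _ Hb). destruct (Nat.leb_spec NN (bidx p)) as [HN|HN].
      * cbn [path ph cnt]. rewrite Hc. destruct sg; finZ.
      * destruct sg; cbn [path ph cnt].
        -- tlcase Hc.
        -- rewrite Hc, (rr_upd_other c (bidx p) Hne). finZ.
    + destruct (Nat.ltb_spec (length p) D); [lia|]. fold (rp (aidx p)).
      rewrite (sale_f _ Ha). cbn [path ph cnt]. rewrite Hc. destruct sg; finZ.
  - destruct f; unfold GOAL, step, sprice, pidx, Phi; cbn [path ph cnt];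
      fold (rp (aidx p)); fold (rp (bidx p));
      replace (Nat.leb D (length p)) with false by (symmetry; apply Nat.leb_gt; lia);
      left.
    + rewrite (sale_f _ Ha). destruct sg; cbn [path ph cnt]; [rewrite Hc; finZ|tlcase Hc].
    + rewrite (sale_f _ Hb). destruct (Nat.leb_spec NN (bidx p)) as [HN|HN].
      * cbn [path ph cnt]. rewrite Hc. destruct sg; finZ.
      * destruct sg; cbn [path ph cnt]; [tlcase Hc|rewrite Hc; finZ].
    + destruct (Nat.ltb_spec (length p) D); [|lia]. fold (rp (midx p)).
      assert (Hm : v < rp (midx p)) by (eapply Rlt_le_trans; [exact Ha|]; apply rp_le; unfold midx; lia).
      rewrite (sale_f _ Hm). cbn [path ph cnt]. simpl cls. rewrite Hc. simpl length.
      destruct sg; finZ.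
Qed.

Lemma comb_L p e f c sg : (length p <= D)%nat -> cls p = Some (false, e) ->
  (forall j, rp j <= v -> (c j <= C)%nat) -> GOAL (mk p f c) sg.
Proof.
  intros HD Hc Hcnt. destruct (facts_L p e HD Hc) as [HbN Hb].
  pose proof (cls_some _ _ _ Hc) as [He _].
  assert (Hab := bidx_le_N p HD).
  assert (Ha : rp (aidx p) <= v) by (eapply Rle_trans; [|exact Hb]; apply rp_le; lia).
  destruct (Nat.leb_spec D (length p)) as [Hleaf|Hint].
  - assert (HL : length p = D) by lia.
    pose proof (L_ne_bstar p e HL Hc) as Hne.
    assert (Hrr : rr (upd c (bidx p)) = rr c).
    { destruct Hne as [Hne|Hne]; [apply rr_upd_other; auto|].
      unfold rr. destruct (Nat.leb_spec NN bstar); [reflexivity|lia]. }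
    destruct f; unfold GOAL, step, sprice, pidx, Phi; cbn [path ph cnt];
      fold (rp (aidx p)); fold (rp (bidx p));
      replace (Nat.leb D (length p)) with true by (symmetry; apply Nat.leb_le; lia);
      left.
    + rewrite (sale_t _ Ha). destruct sg.
      * replace (Nat.leb NN (bidx p) || Nat.leb (S C) (c (bidx p))) with false.
        2:{ symmetry. apply orb_false_iff. split; apply Nat.leb_gt; [lia|]. specialize (Hcnt _ Hb). lia. }
        cbn [path ph cnt]; rewrite Hc; finZ.
      * cbn [path ph cnt]. tlcase Hc.
    + rewrite (sale_t _ Hb). destruct (Nat.leb_spec NN (bidx p)) as [HN|HN]; [lia|].
      destruct sg; cbn [path ph cnt].
      -- tlcase Hc.
      -- rewrite Hc, Hrr. finZ.
    + destruct (Nat.ltb_spec (length p) D); [lia|]. fold (rp (aidx p)).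
      rewrite (sale_t _ Ha). cbn [path ph cnt]. rewrite Hc. destruct sg; finZ.
  - destruct f; unfold GOAL, step, sprice, pidx, Phi; cbn [path ph cnt];
      fold (rp (aidx p)); fold (rp (bidx p));
      replace (Nat.leb D (length p)) with false by (symmetry; apply Nat.leb_gt; lia);
      left.
    + rewrite (sale_t _ Ha). destruct sg; cbn [path ph cnt]; [rewrite Hc; finZ|tlcase Hc].
    + rewrite (sale_t _ Hb). destruct (Nat.leb_spec NN (bidx p)) as [HN|HN]; [lia|].
      destruct sg; cbn [path ph cnt]; [tlcase Hc|rewrite Hc; finZ].
    + destruct (Nat.ltb_spec (length p) D); [|lia]. fold (rp (midx p)).
      assert (Hm : rp (midx p) <= v).
      { eapply Rle_trans; [|exact Hb]; apply rp_le. unfold midx, bidx, wid.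
        rewrite (pow2_split (length p)) by lia. lia. }
      rewrite (sale_t _ Hm). cbn [path ph cnt]. simpl cls. rewrite Hc. simpl length.
      destruct sg; finZ.
Qed.

Lemma comb s sg : (length (path s) <= D)%nat -> (forall j, rp j <= v -> (cnt s j <= C)%nat) ->
  GOAL s sg.
Proof.
  destruct s as [p f c]; cbn [path cnt]; intros HD Hcnt.
  destruct (cls p) as [[[|] e]|] eqn:Hc.
  - apply comb_H with e; auto.
  - apply comb_L with e; auto.
  - apply comb_none; auto.
Qed.


Lemma run_len_gen h s : (length (path s) <= D)%nat -> (length (path (fold_left step h s)) <= D)%nat.
Proof. revert s; induction h as [|x h IH]; simpl; intros s H; auto. apply IH, step_len, H. Qed.

Lemma run_len h : (length (path (run h)) <= D)%nat.
Proof. unfold run. apply run_len_gen. simpl. lia. Qed.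

Lemma run_S sigma t : run (hist sigma (S t)) = step (run (hist sigma t)) (sigma t).
Proof. unfold run, hist. rewrite seq_S, map_app, fold_left_app. reflexivity. Qed.

Lemma sprice_bounds s : (length (path s) <= D)%nat -> 0 <= sprice s <= 1.
Proof.
  intro H. destruct s as [p f c]. pose proof (pidx_le p f c H) as Hle.
  change (sprice (mk p f c)) with (rp (pidx (mk p f c))). split.
  - unfold rp. pose proof NN_pos. apply Rmult_le_pos; [apply pos_INR|].
    left; apply Rinv_0_lt_compat, lt_0_INR; lia.
  - rewrite <- rp_NN. apply rp_le. exact Hle.
Qed.

Lemma step_cnt s sg j : rp j <= v ->
  (cnt (step s sg) j <= cnt s j + (if Bool.eqb sg (sale (sprice s) v) then 0 else 1))%nat.
Proof.
  intro Hj. destruct s as [p f c]. unfold step; cbn [path ph cnt].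
  destruct f;
  repeat match goal with |- context [if ?b then _ else _] =>
    lazymatch b with
    | Bool.eqb _ _ => fail
    | _ => destruct b eqn:?
    end end; cbn [cnt]; try lia.
  unfold upd. destruct (Nat.eqb_spec j (bidx p)); [|lia]. subst j.
  change (sprice (mk p PB c)) with (rp (bidx p)). rewrite (sale_t _ Hj). simpl. lia.
Qed.

Lemma Phi_lb s : (length (path s) <= D)%nat -> (-2 <= Phi s)%Z.
Proof.
  intro H. destruct s as [p f c]. unfold Phi, PhiF; cbn [path ph cnt] in *.
  assert (gdF (cls p) (length p) <= D)%nat by (unfold gdF; destruct (cls p) as [[? ?]|]; lia).
  unfold W. destruct (cls p) as [[[|] e]|]; destruct f;
  repeat match goal with
  | |- context [Nat.leb ?a ?b] => destruct (Nat.leb_spec a b)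
  | |- context [Nat.eqb ?a ?b] => destruct (Nat.eqb_spec a b)
  end; lia.
Qed.

Lemma Phi_s0 : (Phi s0 <= 3 * Z.of_nat D + 2 * Z.of_nat (S C))%Z.
Proof.
  unfold Phi, PhiF, s0; cbn [path ph cnt]. simpl cls. simpl length. unfold gdF, W.
  pose proof (rr_le (fun _ => 0%nat)). lia.
Qed.

Lemma inv sigma t : (num_corrupt galg v sigma t <= C)%nat ->
  let s := run (hist sigma t) in
  (forall j, rp j <= v -> (cnt s j <= num_corrupt galg v sigma t)%nat) /\
  INR t * v - revenue galg v sigma t + IZR (Phi s) <=
    IZR (Phi s0) + 5 * INR (num_corrupt galg v sigma t) + INR t / INR NN.
Proof.
  induction t as [|t IH]; intros Hnc.
  - cbn zeta. change (run (hist sigma 0)) with s0. split.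
    + intros. cbn. lia.
    + simpl num_corrupt. simpl revenue. simpl INR. unfold Rdiv. rewrite !Rmult_0_l. lra.
  - cbn zeta. rewrite run_S. simpl num_corrupt in *. simpl revenue.
    change (Defs.price galg sigma t) with (sprice (run (hist sigma t))) in *.
    set (s := run (hist sigma t)) in *.
    set (y := sale (sprice s) v) in *.
    assert (Hnc' : (num_corrupt galg v sigma t <= C)%nat) by lia.
    destruct (IH Hnc') as [IHc IHr]. clear IH.
    split.
    + intros j Hj. pose proof (step_cnt s (sigma t) j Hj). specialize (IHc j Hj).
      fold y in H. lia.
    + pose proof (run_len (hist sigma t)) as HL. fold s in HL.
      assert (Hcnt : forall j, rp j <= v -> (cnt s j <= C)%nat).
      { intros j Hj. specialize (IHc j Hj). lia. }
      pose proof (sprice_bounds s HL) as Hpb.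
      destruct (comb s (sigma t) HL Hcnt) as [Hz|[Hz [Hy Hex]]]; change (sale (sprice s) v) with y in Hz |- *; try change (sale (sprice s) v) with y in Hy.
      * apply IZR_le in Hz. rewrite plus_IZR, plus_IZR, mult_IZR in Hz.
        rewrite !S_INR, plus_INR in *.
        assert (Hl : IZR (lieZ (sigma t) y) = INR (if Bool.eqb (sigma t) y then 0 else 1)).
        { unfold lieZ. destruct (Bool.eqb (sigma t) y); simpl; reflexivity. }
        rewrite Hl in Hz.
        assert (Hc1 : v - (if y then sprice s else 0) <= 1) by (destruct y; lra).
        assert (0 <= 1 / INR NN).
        { unfold Rdiv. rewrite Rmult_1_l. left. apply Rinv_0_lt_compat, lt_0_INR. pose proof NN_pos. lia. }
        unfold Rdiv in *. simpl IZR in Hz. lra.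
      * apply IZR_le in Hz. rewrite Hy in *.
        rewrite !S_INR, plus_INR in *.
        assert (0 <= INR (if Bool.eqb (sigma t) true then 0 else 1)) by apply pos_INR.
        unfold Rdiv in *. lra.
Qed.

End Alg.

Lemma log_facts (T : nat) : (2 <= T)%nat ->
  INR (Nat.log2_up T) <= 1 + log2 (INR T) /\ 1 <= log2 (INR T).
Proof.
  intro HT. destruct (Nat.log2_up_spec T ltac:(lia)) as [H1 _].
  pose proof (Nat.log2_up_pos T ltac:(lia)) as Hpos.
  set (D := Nat.log2_up T) in *.
  assert (Hl2 : 0 < ln 2) by (pose proof ln_lt_2; lra).
  assert (HT0 : 0 < INR T) by (apply lt_0_INR; lia).
  unfold log2. split.
  - apply lt_INR in H1. rewrite pow_INR in H1. simpl INR in H1.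
    replace (1 + 1) with 2 in H1 by ring.
    apply ln_increasing in H1; [|apply pow_lt; lra].
    rewrite ln_pow in H1 by lra.
    replace (INR D) with (INR (Nat.pred D) + 1) by (rewrite <- S_INR; f_equal; lia).
    apply (Rmult_lt_compat_r (/ ln 2)) in H1; [|apply Rinv_0_lt_compat; lra].
    rewrite Rmult_assoc, Rinv_r in H1 by lra. unfold Rdiv. lra.
  - destruct (Nat.eq_dec T 2) as [->|Hne].
    + simpl INR. replace (1 + 1) with 2 by ring. unfold Rdiv. rewrite Rinv_r; lra.
    + assert (ln 2 < ln (INR T)).
      { apply ln_increasing; [lra|]. replace 2 with (INR 2) by (simpl; ring). apply lt_INR. lia. }
      apply (Rmult_le_reg_r (ln 2)); [lra|]. unfold Rdiv. rewrite Rmult_assoc, Rinv_l by lra. lra.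
Qed.

Theorem theoremB2 :
  exists K : R, 0 < K /\
  forall (T C : nat), (2 <= T)%nat ->
  exists alg : algorithm,
    (forall h, 0 <= alg h <= 1) /\
    forall (v : R) (sigma : nat -> bool),
      0 <= v <= 1 ->
      (num_corrupt alg v sigma T <= C)%nat ->
      regret alg v sigma T <= K * (INR C + log2 (INR T)).
Proof.
  exists 11. split; [lra|]. intros T C HT.
  set (D := Nat.log2_up T).
  exists (galg D C). split.
  - intro h. unfold galg. apply sprice_bounds, run_len.
  - intros v sigma Hv Hnc.
    destruct (inv D C v Hv sigma T Hnc) as [_ Hr].
    pose proof (Phi_lb D C v (run D C (hist sigma T)) (run_len D C _)) as Hlb.
    pose proof (Phi_s0 D C v) as H0.
    apply IZR_le in Hlb. apply IZR_le in H0.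
    rewrite plus_IZR, !mult_IZR in H0. rewrite <- !INR_IZR_INZ in H0.
    destruct (log_facts T HT) as [L1 L2]. fold D in L1.
    assert (HTN : INR T / INR (NN D) <= 1).
    { destruct (Nat.log2_up_spec T ltac:(lia)) as [_ H2].
      pose proof (NN_pos D). apply le_INR in H2. unfold NN. fold D in H2 |- *.
      assert (0 < INR (2 ^ D)) by (apply lt_0_INR; unfold NN in *; lia).
      apply (Rmult_le_reg_r (INR (2 ^ D))); auto. unfold Rdiv. rewrite Rmult_assoc, Rinv_l by lra. lra. }
    apply le_INR in Hnc. rewrite S_INR in H0.
    unfold regret. simpl IZR in *. pose proof (pos_INR C). lra.
Qed.
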